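(* Let $X$ be a complex torus of dimension $g$ with period matrix $(\tau\ \ I_g)$, $\tau=(\tau_{ij})\in M_g(\mathbb{C})$, $\det(\operatorname{Im}\tau)\neq0$, and let $\mathfrak{d}=[\mathbb{Q}(\{\tau_{ij}\}):\mathbb{Q}]$. For $1\le i<j\le g$ let $$\mathfrak{d}_{ij}=\dim_{\mathbb{Q}}\big\langle 1,\ \tau_{ki},\ \tau_{kj},\ \tau_{li}\tau_{kj}-\tau_{ki}\tau_{lj}\ :\ l,k=1,\dots,g\big\rangle_{\mathbb{Q}}.$$ Then the Picard number of $X$ satisfies $$\rho(X)\ \ge\ 2g^2-g-\sum_{1\le i<j\le g}\mathfrak{d}_{ij}\ \ge\ g^2-g(g-1)\Big(\frac{\mathfrak{d}}{2}-1\Big).$$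
   Context: A complex torus of dimension $g$ with period matrix $\Pi=(\tau\ \ I_g)$ is $X=\mathbb{C}^g/\Lambda$, where $\Lambda$ is the lattice generated by the $2g$ columns of $\Pi$. The Picard number $\rho(X)$ is the rank of the Néron–Severi group $\mathrm{NS}(X)$. *)

(* Defs.v *)
From HB Require Import structures.
From mathcomp Require Import all_boot all_order all_algebra.
From mathcomp Require Import boolp reals complex.
Set Implicit Arguments. Unset Strict Implicit. Unset Printing Implicit Defensive.
Import Order.TTheory GRing.Theory Num.Theory.
Local Open Scope ring_scope.
Local Open Scope complex_scope.

Section Torus.
Variable R : realType.
Notation C := R[i].

Definition qindep (s : seq C) : Prop :=
  forall c : seq rat, size c = size s ->
    \sum_(k < size s) ratr c`_k * s`_k = 0 -> forall k, c`_k = 0.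

(** dim_Q of the Q-span of a finite family: the maximal size of a
    Q-linearly independent subfamily. *)
Definition qspan_dim (s : seq C) : nat :=
  (\max_(m : (size s).-tuple bool | `[< qindep (mask m s) >]) count id m)%N.

(** Subfields of C (they automatically contain Q). *)
Definition subfield_pred (S : C -> Prop) : Prop :=
  [/\ S 1, forall x y, S x -> S y -> S (x - y),
      forall x y, S x -> S y -> S (x * y) & forall x, S x -> S x^-1].

Definition gen_field (g : nat) (tau : 'M[C]_g) (x : C) : Prop :=
  forall S, subfield_pred S -> (forall i j, S (tau i j)) -> S x.

Definition field_degree (g : nat) (tau : 'M[C]_g) (d : nat) : Prop :=
  exists b : seq C, [/\ size b = d, forall x, x \in b -> gen_field tau x,
    qindep b &
    forall x, gen_field tau x ->
      exists c : seq rat, size c = size b /\ x = \sum_(k < size b) ratr c`_k * b`_k].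

(** The spanning family defining d_ij (for 0-based indices i < j). *)
Definition dij_family (g : nat) (tau : 'M[C]_g) (i j : 'I_g) : seq C :=
  1 :: [seq tau k i | k <- enum 'I_g] ++ [seq tau k j | k <- enum 'I_g]
    ++ [seq tau l i * tau k j - tau k i * tau l j | l <- enum 'I_g, k <- enum 'I_g].

Definition dij (g : nat) (tau : 'M[C]_g) (i j : 'I_g) : nat :=
  qspan_dim (dij_family tau i j).

(** Real-coordinate matrix of x |-> Pi x, Pi = (tau I_g): R^{2g} -> C^g = R^g x R^g
    (real parts, then imaginary parts). *)
Definition period_real (g : nat) (tau : 'M[C]_g) : 'M[R]_(g + g) :=
  block_mx (map_mx (fun z : C => complex.Re z) tau) 1%:M
           (map_mx (fun z : C => complex.Im z) tau) 0.

(** Multiplication by i on C^g = R^g x R^g. *)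
Definition mul_i (g : nat) : 'M[R]_(g + g) := block_mx 0 (- 1%:M) 1%:M 0.

(** The complex structure J on Lambda (x) R = R^{2g} in lattice coordinates. *)
Definition cplx_struct (g : nat) (tau : 'M[C]_g) : 'M[R]_(g + g) :=
  invmx (period_real tau) *m mul_i g *m period_real tau.

(** NS(X) (x) Q: rational alternating forms E on Lambda (matrix w.r.t. the
    basis given by the columns of Pi) with E(ix, iy) = E(x, y). *)
Definition NSQ (g : nat) (tau : 'M[C]_g) (M : 'M[rat]_(g + g)) : Prop :=
  M^T = - M /\
  let Mr := map_mx (fun q : rat => (ratr q : R)) M in
  (cplx_struct tau)^T *m Mr *m cplx_struct tau = Mr.

(** Picard number = rank NS(X) = dim_Q NS(X) (x) Q. *)
Definition picard_number (g : nat) (tau : 'M[C]_g) : nat :=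
  (\max_(n < ((g + g) ^ 2).+1 |
     `[< exists s : seq 'M[rat]_(g + g),
           [/\ size s = val n, free s & forall M, M \in s -> NSQ tau M] >]) val n)%N.

End Torus.

(* Main.v *)
Require Import Defs.
From HB Require Import structures.
From mathcomp Require Import all_boot all_order all_algebra.
From mathcomp Require Import boolp reals complex.
From mathcomp Require Import zify ring lra.
Set Implicit Arguments. Unset Strict Implicit. Unset Printing Implicit Defensive.
Import Order.TTheory GRing.Theory Num.Theory.
Local Open Scope ring_scope.
Section S.
Variable R : realType.
Local Notation C := R[i].
Local Open Scope complex_scope.
Lemma ratrC (q : rat) : (ratr q : C) = Complex (ratr q) 0.
Proof.
have -> : Complex (ratr q) 0 = (ratr q : R)%:C by [].
by rewrite (fmorph_rat (real_complex R)). 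
Qed.
Lemma mulC (a b c d : R) : Complex a b * Complex c d = Complex (a*c - b*d) (a*d + b*c) :> C.
Proof. by []. Qed.
Lemma addC (a b c d : R) : Complex a b + Complex c d = Complex (a+c) (b+d) :> C.
Proof. by []. Qed.
Lemma sumC (I : Type) (r : seq I) (P : pred I) (f h : I -> R) :
  \sum_(i <- r | P i) Complex (f i) (h i) = Complex (\sum_(i <- r | P i) f i) (\sum_(i <- r | P i) h i) :> C.
Proof.
elim: r => [|x r IH]; first by rewrite !big_nil.
by rewrite !big_cons; case: (P x); rewrite IH.
Qed.
End S.
Section Mask.
Variable R : realType.
Local Notation C := R[i].

Fixpoint expand (m : bitseq) (c : seq rat) : seq rat :=
  match m with
  | [::] => [::]
  | b :: m' => if b then head 0 c :: expand m' (behead c) else 0 :: expand m' c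
  end.

Lemma size_expand m c : size (expand m c) = size m.
Proof. by elim: m c => [|[] m IH] c //=; rewrite IH. Qed.

Lemma sum_mask (m : bitseq) (s : seq C) (c : seq rat) : size m = size s ->
  \sum_(k < size (mask m s)) ratr c`_k * (mask m s)`_k =
  \sum_(k < size s) ratr (expand m c)`_k * s`_k.
Proof.
elim: m s c => [|b m IH] [|x s] c //=; first by rewrite !big_ord0.
move=> /succn_inj Hs.
case: b => /=.
  rewrite !big_ord_recl /= -(IH s (behead c) Hs); congr (_ + _).
  apply: eq_bigr => k _; rewrite /bump /= add0n add1n. by case: c => [|? ?]; rewrite ?nth_nil.
rewrite big_ord_recl /= (IH s c Hs) rmorph0 mul0r add0r.
by apply: eq_bigr => k _.
Qed.

Lemma expand_false m c i : nth false m i = false -> (expand m c)`_i = 0.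
Proof.
elim: m c i => [|b m IH] c [|i] //=; first by move=> ->.
  by move=> H; case: b => /=; rewrite IH.
Qed.

Lemma expand_zero m c : (forall i, (expand m c)`_i = 0) -> (size c <= count id m)%N ->
  forall k, c`_k = 0.
Proof.
elim: m c => [|b m IH] c /= H Hs k.
  by rewrite nth_default //; move: Hs; rewrite leqn0 => /eqP ->.
case: b H Hs => /= H Hs.
  case: c H Hs => [|x c] H Hs; first by rewrite nth_nil.
  case: k => [|k] /=; first by have := H 0%N.
  apply: (IH c) => // i; exact: (H i.+1).
apply: (IH c) => // i; exact: (H i.+1).
Qed.

End Mask.
Section Kex.
Variable R : realType.
Local Notation C := R[i].

Definition lin (s : seq C) (v : 'rV[rat]_(size s)) : C :=
  \sum_(k < size s) ratr (v 0 k) * s`_k.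

Lemma linD s v w : lin (v + w) = lin v + lin (s:=s) w.
Proof. by rewrite /lin -big_split; apply: eq_bigr => k _; rewrite mxE rmorphD mulrDl. Qed.

Lemma linZ s a v : lin (a *: v) = ratr a * lin (s:=s) v.
Proof. by rewrite /lin mulr_sumr; apply: eq_bigr => k _; rewrite mxE rmorphM mulrA. Qed.

Lemma lin0 s : lin (0 : 'rV_(size s)) = 0.
Proof. by rewrite /lin big1 // => k _; rewrite mxE rmorph0 mul0r. Qed.

Lemma count_mktuple n (F : 'I_n -> bool) : count id [tuple F i | i < n] = #|[pred i | F i]|.
Proof.
rewrite /= count_map cardE -size_filter /enum_mem -enumT /=.
by rewrite filter_predT.
Qed.

Lemma existsK (s : seq C) : exists K : 'M[rat]_(size s),
  (forall w, (w <= K)%MS -> lin w = 0) /\ (size s - \rank K <= qspan_dim s)%N.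
Proof.
pose P r := `[< exists K : 'M[rat]_(size s), (forall w, (w <= K)%MS -> lin w = 0) /\ \rank K = r >].
have P0 : P 0%N.
  apply/asboolP; exists 0; split; last exact: mxrank0.
  by move=> w; rewrite submx0 => /eqP ->; exact: lin0.
have Pb r : P r -> (r <= size s)%N.
  by case/asboolP => K [_ <-]; exact: rank_leq_col.
have exP : exists r, P r by exists 0%N.
case: (ex_maxnP exP Pb) => r /asboolP [K [HK rK]] Pmax.
have maxK v : lin v = 0 -> (v <= K)%MS.
  move=> lv; apply/negPn/negP => nv.
  have HKv : forall w, (w <= K + v)%MS -> lin w = 0.
    move=> w /sub_addsmxP [[a b]] /= ->.
    rewrite [b]mx11_scalar mul_scalar_mx linD linZ lv mulr0 addr0.
    by apply: HK; apply: submxMl.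
  have : (K < K + v)%MS.
    rewrite ltmxE addsmxSl /=; apply: contra nv => H.
    exact: submx_trans (addsmxSr K v) H.
  rewrite ltmxErank => /andP [_]; rewrite rK => lt.
  have : (\rank (K + v)%MS <= r)%N.
    by apply: Pmax; apply/asboolP; exists (K + v)%MS.
  by rewrite leqNgt lt.
exists K; split => //.
pose Cm := cokermx K.
pose f := maxrankfun Cm.
have finj : injective f := @maxrankfun_inj _ _ _ Cm.
have ffree : row_free (rowsub f Cm) := maxrowsub_free Cm.
pose S := [set f t | t in 'I_(\rank Cm)].
pose m := [tuple (i \in S) | i < size s].
have cm : count id m = \rank Cm.
  rewrite count_mktuple (_ : #|_| = #|S|); last by apply: eq_card.
  by rewrite card_imset // card_ord.
rewrite -mxrank_coker -/Cm -cm.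
apply: (@leq_bigmax_cond _ (fun m : (size s).-tuple bool => `[< qindep (mask m s) >]) (fun m => count id m) m).
apply/asboolP => c Hc Hsum.
have sm : size m = size s by rewrite size_tuple.
rewrite sum_mask // in Hsum.
pose v : 'rV[rat]_(size s) := \row_i (expand m c)`_i.
have lv : lin v = 0.
  by rewrite /lin -[RHS]Hsum; apply: eq_bigr => k _; rewrite mxE.
have /maxK : lin v = 0 by [].
rewrite submxE => /eqP vC.
pose w : 'rV[rat]_(\rank Cm) := \row_t v 0 (f t).
have wC : w *m rowsub f Cm = v *m Cm.
  apply/rowP => j; rewrite !mxE.
  rewrite (bigID (fun i => i \in S)) /= [X in _ = _ + X]big1 ?addr0; last first.
    move=> i iS; rewrite mxE expand_false ?mul0r //.
    by rewrite -[i : nat]/(nat_of_ord i) (nth_map i) ?size_enum_ord // nth_ord_enum (negbTE iS).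
  rewrite big_imset /=; last by move=> x y _ _; apply: finj.
  by apply: eq_bigr => t _; rewrite !mxE.
have w0 : w = 0.
  apply: (row_free_inj ffree); rewrite mul0mx wC; exact: vC.
have e0 i : (expand m c)`_i = 0.
  case: (ltnP i (size s)) => Hi; last by rewrite nth_default // size_expand sm.
  have -> : (expand m c)`_i = v 0 (Ordinal Hi) by rewrite mxE.
  case: (boolP (Ordinal Hi \in S)) => [/imsetP [t _ ->]|iS].
    by move/rowP: w0 => /(_ t); rewrite !mxE.
  rewrite mxE expand_false //.
  by rewrite (nth_map (Ordinal Hi)) ?size_enum_ord // nth_ord_enum (negbTE iS).
apply: (expand_zero e0).
by rewrite Hc size_mask ?sm.
Qed.

End Kex.
Section Upper.
Variable R : realType.
Local Notation C := R[i].

Lemma qspan_le (s b : seq C) :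
  (forall x, x \in s -> exists c : seq rat, size c = size b /\
      x = \sum_(k < size b) ratr c`_k * b`_k) ->
  (qspan_dim s <= size b)%N.
Proof.
move=> Hs; apply/bigmax_leqP => m /asboolP Hind.
set t := mask m s in Hind.
have -> : count id m = size t by rewrite size_mask // size_tuple.
have : forall k : 'I_(size t), exists c : seq rat, size c = size b /\
    t`_k = \sum_(l < size b) ratr c`_l * b`_l.
  move=> k; apply: Hs; apply: (@mem_mask _ _ m); rewrite -/t; exact: mem_nth.
case/fin_all_exists => cf Hcf.
pose V : 'M[rat]_(size t, size b) := \matrix_(k, l) (cf k)`_l.
suff rV : row_free V by move/eqP: rV => <-; exact: rank_leq_col.
rewrite -kermx_eq0; apply/eqP/row_matrixP => k; rewrite row0.
have : (row k (kermx V) <= kermx V)%MS by exact: row_sub.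
move/sub_kermxP; move: (row k (kermx V)) => w wV.
pose c := [seq w 0 k | k <- enum 'I_(size t)].
have cE (k0 : 'I_(size t)) : c`_k0 = w 0 k0.
  by rewrite (nth_map k0) ?size_enum_ord // nth_ord_enum.
apply/rowP => k0; rewrite mxE -cE.
apply: (Hind c); first by rewrite size_map size_enum_ord.
transitivity (\sum_(l < size b) ratr ((w *m V) 0 l) * b`_l); last first.
  by rewrite wV big1 // => l _; rewrite mxE rmorph0 mul0r.
transitivity (\sum_(k < size t) \sum_(l < size b) ratr (w 0 k) * (ratr (cf k)`_l * b`_l)).
  apply: eq_bigr => k1 _; rewrite cE (proj2 (Hcf k1)) mulr_sumr //.
rewrite exchange_big /=; apply: eq_bigr => l _.
rewrite mxE rmorph_sum mulr_suml; apply: eq_bigr => k1 _.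
by rewrite mxE rmorphM mulrA.
Qed.

End Upper.
Lemma sum_iota2 n : (2 * \sum_(i < n) i = n * n.-1)%N.
Proof.
elim: n => [|n IH]; first by rewrite big_ord0.
rewrite big_ord_recr /= mulnDr IH; case: n {IH} => //= n; nia.
Qed.

Lemma inner_count n (i : 'I_n) : (\sum_(j < n | (i < j)%N) 1 = n - i.+1)%N.
Proof.
rewrite -(big_mkord (fun j => (i < j)%N) (fun _ => 1%N)).
rewrite (big_cat_nat (n:=i.+1)) //= ?ltn_ord // big_nat_cond big1 ?add0n; last first.
  by move=> j /andP [/andP [_ Hj]]; rewrite ltnNge -ltnS Hj.
rewrite big_nat_cond (eq_bigl (fun j => (i.+1 <= j < n)%N)); last first.
  by move=> j /=; case: (i < j)%N; rewrite ?andbT ?andbF.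
rewrite -[X in _ = X]muln1 -sum_nat_const_nat [RHS]big_nat_cond.
by apply: eq_bigl => j; rewrite andbT.
Qed.

Lemma pairs_count n : (2 * \sum_(i < n) \sum_(j < n | (i < j)%N) 1 = n * n.-1)%N.
Proof.
rewrite -sum_iota2; congr (2 * _)%N.
rewrite (eq_bigr (fun i : 'I_n => n - i.+1)%N); last by move=> i _; exact: inner_count.
rewrite (reindex_inj rev_ord_inj) /=; apply: eq_bigr => i _.
have := ltn_ord i; lia.
Qed.
Section Part2.
Variable R : realType.
Local Notation C := R[i].

Lemma gen_field1 g (tau : 'M[C]_g) : gen_field tau 1.
Proof. by move=> S [H1 _ _ _]. Qed.
Lemma gen_fieldB g (tau : 'M[C]_g) x y : gen_field tau x -> gen_field tau y -> gen_field tau (x - y).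
Proof. by move=> Hx Hy S HS Ht; case: (HS) => _ HB _ _; apply: HB; [apply: Hx|apply: Hy]. Qed.
Lemma gen_fieldM g (tau : 'M[C]_g) x y : gen_field tau x -> gen_field tau y -> gen_field tau (x * y).
Proof. by move=> Hx Hy S HS Ht; case: (HS) => _ _ HM _; apply: HM; [apply: Hx|apply: Hy]. Qed.
Lemma gen_fieldT g (tau : 'M[C]_g) i j : gen_field tau (tau i j).
Proof. by move=> S HS Ht. Qed.

Lemma dij_family_gen g (tau : 'M[C]_g) i j x : x \in dij_family tau i j -> gen_field tau x.
Proof.
rewrite /dij_family in_cons => /orP [/eqP ->|]; first exact: gen_field1.
rewrite !mem_cat => /orP [/mapP [k _ ->]|/orP [/mapP [k _ ->]|]]; try exact: gen_fieldT.
case/allpairsP => [[l k] [_ _ ->]] /=.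
by apply: gen_fieldB; apply: gen_fieldM; apply: gen_fieldT.
Qed.

Lemma dij_le g (tau : 'M[C]_g) d i j : field_degree tau d -> (dij tau i j <= d)%N.
Proof.
case=> b [sb _ _ Hb]; rewrite -sb; apply: qspan_le => x /dij_family_gen /Hb.
exact.
Qed.

Lemma part2 g (tau : 'M[C]_g) d : field_degree tau d ->
  (g ^ 2)%:R - (g * (g - 1))%:R * (d%:R / 2 - 1) <= (2 * g ^ 2 - g)%:R -
    (\sum_(i < g) \sum_(j < g | (i < j)%N) dij tau i j)%N%:R :> rat.
Proof.
move=> Hd; set S := (\sum_(i < g) _)%N.
have HS : (2 * S <= d * (g * g.-1))%N.
  rewrite -pairs_count mulnCA; rewrite leq_mul2l /=.
  rewrite big_distrr /= leq_sum // => i _; rewrite big_distrr /= leq_sum // => j _.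
  by rewrite muln1 dij_le.
have HS' : (2%:R * S%:R <= (d * (g * g.-1))%:R :> rat) by rewrite -natrM ler_nat.
have Hg : (g <= 2 * g ^ 2)%N by nia.
rewrite natrB // (_ : (g - 1)%N = g.-1); last by rewrite subn1.
rewrite !natrM in HS'; rewrite !natrM.
have g1 : (g%:R * g.-1%:R : rat) = g%:R * g%:R - g%:R.
  by case: (g) => [|h] /=; rewrite ?mul0r ?subrr // -addn1 natrD; ring.
rewrite g1 in HS' *.
set G := (g%:R : rat) in HS' *; set D := (d%:R : rat) in HS' *.
have -> : (G * G - G) * (D / 2 - 1) = D * (G * G - G) / 2 - (G * G - G) by ring.
lra.
Qed.
End Part2.
Section Block.
Variable R : realType.

Lemma eD m n (A B : 'M[R]_(m, n)) i j : (A + B) i j = A i j + B i j.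
Proof. by rewrite mxE. Qed.
Lemma eN m n (A : 'M[R]_(m, n)) i j : (- A) i j = - A i j.
Proof. by rewrite mxE. Qed.
Lemma e0 m n i j : (0 : 'M[R]_(m, n)) i j = 0.
Proof. by rewrite mxE. Qed.

Variables (g : nat) (X Y A B D : 'M[R]_g).
Hypothesis Yu : Y \in unitmx.
Hypothesis DA : D^T = - D.
Hypothesis ReE0 : A + X^T *m B^T - B *m X + X^T *m D *m X - Y^T *m D *m Y = 0.
Hypothesis ImE0 : Y^T *m B^T - B *m Y + X^T *m D *m Y + Y^T *m D *m X = 0.

Lemma block_J :
  let P := block_mx X 1%:M Y 0 in let Mr := block_mx A B (- B^T) D in
  let K := block_mx 0 (- 1%:M) 1%:M 0 in
  let J := invmx P *m K *m P in J^T *m Mr *m J = Mr.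
Proof.
move=> P Mr K J.
have Pu : P \in unitmx.
  have : P *m block_mx 0 (invmx Y) 1%:M (- (X *m invmx Y)) = 1%:M.
    rewrite mulmx_block !mulmx0 !mul0mx !mulmx1 !mul1mx !add0r addr0 subrr mulmxV //.
    by rewrite [RHS](scalar_mx_block g g).
  by case/mulmx1_unit.
set Pi := invmx P.
set N := Pi^T *m Mr *m Pi.
have MN : Mr = P^T *m N *m P.
  by rewrite /N !mulmxA -trmx_mul -!mulmxA [Pi *m P]mulVmx // mulmx1 trmx1 mul1mx.
have MN0 := MN.
rewrite -(submxK N) in MN.
set N1 := ulsubmx N in MN; set N2 := ursubmx N in MN; set N3 := dlsubmx N in MN; set N4 := drsubmx N in MN.
move: MN; rewrite /P /Mr tr_block_mx !mulmx_block trmx1 trmx0 !mul1mx !mul0mx !mulmx1 !mulmx0 !addr0.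
move/eq_block_mx => [hA hB hBt hD].
have hBt' : B^T = -(N1 *m X + N2 *m Y) by rewrite -hBt opprK.
have Ytu : Y^T \in unitmx by rewrite unitmx_tr.
have canc Z : Y^T *m Z *m Y = 0 -> Z = 0.
  move=> e; have := congr1 (fun W => invmx Y^T *m (W *m invmx Y)) e.
  by rewrite /= mulmxK // mulKmx // mul0mx mulmx0.
have e1 : N4 - N1 = 0.
  apply: canc; rewrite -ReE0 hBt' hA hB hD.
  rewrite ?(mulmxDl, mulmxDr, mulmxN, mulNmx, mulmxA).
  apply/matrixP => i j; rewrite ?(eD, eN); ring.
have e2 : N2 + N3 = 0.
  apply: canc; rewrite -[RHS]oppr0 -ImE0 hBt' hB hD.
  rewrite ?(mulmxDl, mulmxDr, mulmxN, mulNmx, mulmxA).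
  apply/matrixP => i j; rewrite ?(eD, eN); ring.
have N4E : N4 = N1 by apply/eqP; rewrite -subr_eq0 e1.
have N3E : N3 = - N2 by apply/eqP; rewrite -addr_eq0 addrC e2.
have KNK : K^T *m N *m K = N.
  have KT : K^T = block_mx 0 1%:M (- 1%:M) 0.
    rewrite /K tr_block_mx trmx0 trmx1; congr block_mx.
    by apply/matrixP => i j; rewrite !mxE eq_sym.
  rewrite KT -(submxK N) -/N1 -/N2 -/N3 -/N4 /K !mulmx_block.
  rewrite !mul0mx !mulmx0 !mul1mx !mulmx1 !mulNmx !mulmxN !mul1mx !mulmx1 !add0r !addr0.
  by rewrite N4E N3E !opprK.
by rewrite -/Mr [RHS]MN0 -KNK /J /N !trmx_mul !mulmxA.
Qed.
End Block.
Section Zip.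
Variable V : zmodType.

Lemma sum_nth_zip (A B : Type) (a0 : A) (b0 : B) (a : seq A) (s : seq B) (F : A -> B -> V) :
  size a = size s ->
  \sum_(k < size s) F (nth a0 a k) (nth b0 s k) = \sum_(p <- zip a s) F p.1 p.2.
Proof.
elim: s a => [|y s IH] [|x a] //=; first by rewrite big_ord0 big_nil.
move=> /succn_inj Ha; rewrite big_ord_recl big_cons /= IH //.
Qed.

Lemma zip_map2 (A B B' : Type) (f : A -> B) (h : A -> B') (s : seq A) :
  zip (map f s) (map h s) = map (fun x => (f x, h x)) s.
Proof. by elim: s => //= x s ->. Qed.

Lemma sum_zip_allpairs (A A' B B' : Type) (s : seq A) (t : seq A') (f : A -> A' -> B)
  (h : A -> A' -> B') (F : B * B' -> V) :
  \sum_(p <- zip [seq f x y | x <- s, y <- t] [seq h x y | x <- s, y <- t]) F p =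
  \sum_(x <- s) \sum_(y <- t) F (f x y, h x y).
Proof.
elim: s => [|x s IH] /=; first by rewrite !big_nil.
rewrite zip_cat ?size_map // big_cat big_cons IH zip_map2 big_map //.
Qed.
End Zip.
Section Fam.
Variable R : realType.
Local Notation C := R[i].
Variables (g : nat) (tau : 'M[C]_g).

Definition Xm : 'M[R]_g := map_mx (fun z : C => complex.Re z) tau.
Definition Ym : 'M[R]_g := map_mx (fun z : C => complex.Im z) tau.

Definition sel (i j : 'I_g) : seq (rat * ('I_(g + g) * 'I_(g + g))) :=
  (2, (lshift g i, lshift g j)) ::
  [seq (2, (lshift g j, rshift g k)) | k <- enum 'I_g] ++
  [seq (-2, (lshift g i, rshift g k)) | k <- enum 'I_g] ++
  [seq (1, (rshift g l, rshift g k)) | l <- enum 'I_g, k <- enum 'I_g].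

Definition cf i j (M : 'M[rat]_(g + g)) : seq rat :=
  [seq e.1 * M e.2.1 e.2.2 | e <- sel i j].

Lemma size_cf i j M : size (cf i j M) = size (dij_family tau i j).
Proof. by rewrite /cf /sel /dij_family /= size_map /= !size_cat !size_map !size_allpairs. Qed.

Definition ReE (Mr : 'M[R]_(g + g)) : 'M[R]_g :=
  ulsubmx Mr + Xm^T *m (ursubmx Mr)^T - ursubmx Mr *m Xm + Xm^T *m drsubmx Mr *m Xm
    - Ym^T *m drsubmx Mr *m Ym.
Definition ImE (Mr : 'M[R]_(g + g)) : 'M[R]_g :=
  Ym^T *m (ursubmx Mr)^T - ursubmx Mr *m Ym + Xm^T *m drsubmx Mr *m Ym
    + Ym^T *m drsubmx Mr *m Xm.

Lemma fam_sum0 i j M :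
  \sum_(k < size (dij_family tau i j)) ratr (cf i j M)`_k * (dij_family tau i j)`_k =
  ratr (2 * M (lshift g i) (lshift g j)) * 1 +
  \sum_k ratr (2 * M (lshift g j) (rshift g k)) * tau k i +
  \sum_k ratr (-2 * M (lshift g i) (rshift g k)) * tau k j +
  \sum_l \sum_k ratr (1 * M (rshift g l) (rshift g k)) * (tau l i * tau k j - tau k i * tau l j).
Proof.
rewrite (@sum_nth_zip _ _ _ 0 0 _ _ (fun a b => ratr a * b)) ?size_cf //.
rewrite /cf /sel /dij_family /= big_cons /= map_cat map_cat.
rewrite zip_cat ?size_map // big_cat zip_cat ?size_map // big_cat /=.
rewrite -!map_comp !zip_map2 !big_map map_allpairs sum_zip_allpairs /=.
rewrite -!enumT !big_enum !addrA.
congr (_ + _ + _ + _); apply: eq_bigr => l _ //; by rewrite big_enum.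
Qed.
End Fam.
Section Fam2.
Variable R : realType.
Local Notation C := R[i].

Lemma cre (q : rat) (z : C) : ratr q * z = Complex (ratr q * complex.Re z) (ratr q * complex.Im z).
Proof. by rewrite ratrC; case: z => a b; rewrite mulC !mul0r subr0 addr0. Qed.
Lemma ReB (z w : C) : complex.Re (z - w) = complex.Re z - complex.Re w. Proof. by case: z; case: w. Qed.
Lemma ImB (z w : C) : complex.Im (z - w) = complex.Im z - complex.Im w. Proof. by case: z; case: w. Qed.
Lemma ReM (z w : C) : complex.Re (z * w) = complex.Re z * complex.Re w - complex.Im z * complex.Im w.
Proof. by case: z; case: w. Qed.
Lemma ImM (z w : C) : complex.Im (z * w) = complex.Re z * complex.Im w + complex.Im z * complex.Re w.
Proof. by case: z => a b; case: w => c d /=; rewrite addrC. Qed.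

Lemma dsum n (d : 'I_n -> 'I_n -> R) (a b : 'I_n -> R) : (forall l k, d l k = - d k l) ->
  \sum_l \sum_k d l k * (a l * b k - a k * b l) = 2 * \sum_l (\sum_k a k * d k l) * b l.
Proof.
move=> dA.
have e1 : \sum_l \sum_k d l k * (a l * b k) = \sum_l (\sum_k a k * d k l) * b l.
  rewrite exchange_big /=; apply: eq_bigr => l _; rewrite mulr_suml.
  by apply: eq_bigr => k _; ring.
have e2 : \sum_l \sum_k d l k * (- (a k * b l)) = \sum_l (\sum_k a k * d k l) * b l.
  apply: eq_bigr => l _; rewrite mulr_suml.
  by apply: eq_bigr => k _; rewrite dA; ring.
transitivity (\sum_l \sum_k d l k * (a l * b k) + \sum_l \sum_k d l k * (- (a k * b l))).
  rewrite -big_split; apply: eq_bigr => l _; rewrite -big_split; apply: eq_bigr => k _ /=.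
  by rewrite -mulrDr.
by rewrite e1 e2 mulr2n mulrDl mul1r.
Qed.

Lemma eTT m (U W : 'M[R]_m) i j : (U^T *m W^T) i j = \sum_k U k i * W j k.
Proof. by rewrite mxE; apply: eq_bigr => k _; rewrite !mxE. Qed.
Lemma eTDV m (U Dm V : 'M[R]_m) i j :
  (U^T *m Dm *m V) i j = \sum_l \sum_k U k i * Dm k l * V l j.
Proof. by rewrite mxE; apply: eq_bigr => l _; rewrite !mxE mulr_suml; apply: eq_bigr => k _; rewrite mxE. Qed.

End Fam2.
Lemma eMM (R : realType) m (U W : 'M[R]_m) i j : (W *m U) i j = \sum_k W i k * U k j.
Proof. by rewrite mxE. Qed.
Section Fam3.
Variable R : realType.
Local Notation C := R[i].
Variables (g : nat) (tau : 'M[C]_g).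

Lemma fam_sum i j M : M^T = - M ->
  \sum_(k < size (dij_family tau i j)) ratr (cf i j M)`_k * (dij_family tau i j)`_k =
  Complex (2 * ReE tau (map_mx ratr M) i j) (2 * ImE tau (map_mx ratr M) i j).
Proof.
move=> MA; rewrite fam_sum0.
rewrite cre; under eq_bigr do rewrite cre. under [X in _ + _ + X + _]eq_bigr do rewrite cre.
under [X in _ + _ + _ + X]eq_bigr do under eq_bigr do rewrite cre.
under [X in _ + _ + _ + X]eq_bigr do rewrite sumC.
rewrite !sumC !addC.
set Mr := map_mx ratr M.
pose d l k := drsubmx Mr l k.
have dA l k : d l k = - d k l.
  rewrite /d !mxE; move/matrixP: (MA) => /(_ (rshift g k) (rshift g l)).
  by rewrite !mxE => ->; rewrite rmorphN.
have r2 (x : rat) : ratr (2 * x) = 2 * (ratr x : R) by rewrite rmorphM rmorph_nat.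
have rm2 (x : rat) : ratr (-2 * x) = - (2 * (ratr x : R)) by rewrite rmorphM rmorphN rmorph_nat mulNr.
have dE l k : ratr (1 * M (rshift g l) (rshift g k)) = d l k :> R by rewrite mul1r /d !mxE.
congr Complex.
- have hA : ratr (2 * M (lshift g i) (lshift g j)) * complex.Re 1 = 2 * ulsubmx Mr i j :> R.
    by rewrite r2 /= mulr1 !mxE.
  have hB : \sum_k ratr (2 * M (lshift g j) (rshift g k)) * complex.Re (tau k i) =
      2 * \sum_k Xm tau k i * ursubmx Mr j k.
    rewrite mulr_sumr; apply: eq_bigr => k _; rewrite r2 !mxE; ring.
  have hC : \sum_k ratr (-2 * M (lshift g i) (rshift g k)) * complex.Re (tau k j) =
      - (2 * \sum_k ursubmx Mr i k * Xm tau k j).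
    rewrite mulr_sumr -sumrN; apply: eq_bigr => k _; rewrite rm2 !mxE; ring.
  have hD : \sum_l \sum_k ratr (1 * M (rshift g l) (rshift g k)) *
      complex.Re (tau l i * tau k j - tau k i * tau l j) =
      2 * \sum_l \sum_k Xm tau k i * drsubmx Mr k l * Xm tau l j -
      2 * \sum_l \sum_k Ym tau k i * drsubmx Mr k l * Ym tau l j.
    transitivity (\sum_l \sum_k d l k * (Xm tau l i * Xm tau k j - Xm tau k i * Xm tau l j) -
       \sum_l \sum_k d l k * (Ym tau l i * Ym tau k j - Ym tau k i * Ym tau l j)).
      rewrite -sumrB; apply: eq_bigr => l _; rewrite -sumrB; apply: eq_bigr => k _.
      rewrite dE ReB !ReM !mxE; ring.
    rewrite !(@dsum _ _ d) //; congr (2 * _ - 2 * _); apply: eq_bigr => l _;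
      by rewrite mulr_suml.
  rewrite hA hB hC hD /ReE !eD !eN eTT !eTDV eMM; ring.
- have hA : ratr (2 * M (lshift g i) (lshift g j)) * complex.Im 1 = 0 :> R.
    by rewrite /= mulr0.
  have hB : \sum_k ratr (2 * M (lshift g j) (rshift g k)) * complex.Im (tau k i) =
      2 * \sum_k Ym tau k i * ursubmx Mr j k.
    rewrite mulr_sumr; apply: eq_bigr => k _; rewrite r2 !mxE; ring.
  have hC : \sum_k ratr (-2 * M (lshift g i) (rshift g k)) * complex.Im (tau k j) =
      - (2 * \sum_k ursubmx Mr i k * Ym tau k j).
    rewrite mulr_sumr -sumrN; apply: eq_bigr => k _; rewrite rm2 !mxE; ring.
  have hD : \sum_l \sum_k ratr (1 * M (rshift g l) (rshift g k)) *
      complex.Im (tau l i * tau k j - tau k i * tau l j) =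
      2 * \sum_l \sum_k Xm tau k i * drsubmx Mr k l * Ym tau l j +
      2 * \sum_l \sum_k Ym tau k i * drsubmx Mr k l * Xm tau l j.
    transitivity (\sum_l \sum_k d l k * (Xm tau l i * Ym tau k j - Xm tau k i * Ym tau l j) +
       \sum_l \sum_k d l k * (Ym tau l i * Xm tau k j - Ym tau k i * Xm tau l j)).
      rewrite -big_split; apply: eq_bigr => l _; rewrite -big_split; apply: eq_bigr => k _.
      rewrite /= dE ImB !ImM !mxE; ring.
    rewrite !(@dsum _ _ d) //; congr (2 * _ + 2 * _); apply: eq_bigr => l _;
      by rewrite mulr_suml.
  rewrite hA hB hC hD /ImE !eD !eN eTT !eTDV eMM; ring.
Qed.
End Fam3.
Section MxSec.
Variable m : nat.
Definition pairT := {p : 'I_m * 'I_m | (p.1 < p.2)%N}.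
Local Notation N := #|{: pairT}|.
Definition pr (t : 'I_N) : 'I_m * 'I_m := val (enum_val t).
Definition Et (t : 'I_N) : 'M[rat]_m :=
  delta_mx (pr t).1 (pr t).2 - delta_mx (pr t).2 (pr t).1.
Definition Mx (x : 'rV[rat]_N) : 'M[rat]_m := \sum_t x 0 t *: Et t.

Lemma pr_lt t : ((pr t).1 < (pr t).2)%N.
Proof. exact: (valP (enum_val t)). Qed.

Lemma pr_inj : injective pr.
Proof. by move=> t t' /val_inj /enum_val_inj. Qed.

Lemma MxE x a b : Mx x a b = \sum_t x 0 t * Et t a b.
Proof. by rewrite /Mx summxE; apply: eq_bigr => t _; rewrite mxE. Qed.

Lemma Et_tr t a b : Et t b a = - Et t a b.
Proof.
have : (Et t)^T = - Et t by rewrite /Et linearB /= !trmx_delta opprB.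
by move/matrixP => /(_ a b); rewrite !mxE.
Qed.

Lemma Mx_tr x : (Mx x)^T = - Mx x.
Proof.
apply/matrixP => a b; rewrite !mxE !MxE -sumrN; apply: eq_bigr => t _.
by rewrite Et_tr mulrN.
Qed.

Lemma Mx_lin r (c : 'I_r -> rat) (v : 'I_r -> 'rV[rat]_N) :
  Mx (\sum_l c l *: v l) = \sum_l c l *: Mx (v l).
Proof.
rewrite /Mx.
transitivity (\sum_t \sum_l (c l * v l 0 t) *: Et t).
  apply: eq_bigr => t _; rewrite summxE scaler_suml; apply: eq_bigr => l _.
  by rewrite mxE.
rewrite exchange_big /=; apply: eq_bigr => l _; rewrite scaler_sumr.
by apply: eq_bigr => t _; rewrite scalerA.
Qed.

Lemma Mx_inj x : Mx x = 0 -> x = 0.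
Proof.
move=> H; apply/rowP => t; rewrite mxE.
move/matrixP: H => /(_ (pr t).1 (pr t).2); rewrite MxE mxE (bigD1 t) //= big1.
  rewrite /Et !mxE !eqxx /= (_ : ((pr t).2 == (pr t).1) = false) ?mulr1 ?subr0 ?addr0 //.
    by rewrite andbF subr0 mulr1.
  by apply: negbTE; rewrite neq_ltn pr_lt orbT.
move=> t' nt; rewrite /Et !mxE.
have -> : ((pr t).1 == (pr t').1) && ((pr t).2 == (pr t').2) = false.
  apply: negbTE; apply: contra nt => /andP [/eqP e1 /eqP e2]; apply/eqP; apply: pr_inj.
  by case: (pr t) (pr t') e1 e2 => [? ?] [? ?] /= -> ->.
have -> : ((pr t).1 == (pr t').2) && ((pr t).2 == (pr t').1) = false.
  apply: negbTE; apply/negP => /andP [/eqP e1 /eqP e2].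
  have := pr_lt t; have := pr_lt t'; rewrite -e1 -e2; lia.
by rewrite subrr mulr0.
Qed.

Lemma card_pairT : (2 * N = m * m.-1)%N.
Proof.
rewrite -pairs_count card_sig /=.
rewrite -sum1_card pair_big_dep /=.
by congr (2 * _)%N.
Qed.
End MxSec.
Lemma cap_rank n (I : finType) (P : pred I) (U : I -> 'M[rat]_n) :
  (n - \rank (\bigcap_(i | P i) U i)%MS <= \sum_(i | P i) (n - \rank (U i)))%N.
Proof.
apply: (big_rec2 (fun y1 y2 => n - \rank y1 <= y2)%N).
  by rewrite mxrank1 subnn.
move=> i y1 y2 _ H.
have := mxrank_sum_cap (U i) y1; have := rank_leq_col (U i + y1)%MS.
have := rank_leq_col (U i); have := rank_leq_col y1.
lia.
Qed.

Section CfLin.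
Variable R : realType.
Variables (g : nat) (tau : 'M[R[i]]_g).
Local Notation N := #|{: pairT (g + g)}|.

Lemma cf_lin i j (x : 'rV[rat]_N) k :
  (cf i j (Mx x))`_k = \sum_t x 0 t * (cf i j (Et t))`_k.
Proof.
rewrite /cf; elim: (sel i j) k => [|e s IH] k /=.
  by rewrite nth_nil big1 // => t _; rewrite mulr0.
case: k => [|k] /=; last exact: IH.
rewrite MxE mulr_sumr; apply: eq_bigr => t _; ring.
Qed.
End CfLin.
Section Anti.
Variable R : realType.
Variables (g : nat) (tau : 'M[R[i]]_g).

Lemma anti_zero (E : 'M[R]_g) : E^T = - E -> (forall i j : 'I_g, (i < j)%N -> E i j = 0) -> E = 0.
Proof.
move=> ET H; apply/matrixP => i j; rewrite mxE.
have Ea a b : E b a = - E a b by move/matrixP: ET => /(_ a b); rewrite !mxE.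
case: (ltngtP i j) => [lt|gt|/val_inj eq]; first exact: H.
  by rewrite Ea H // oppr0.
by subst j; have := Ea i i; lra.
Qed.

Lemma anti_blocks (Mr : 'M[R]_(g + g)) : Mr^T = - Mr ->
  [/\ (ulsubmx Mr)^T = - ulsubmx Mr, (drsubmx Mr)^T = - drsubmx Mr &
      dlsubmx Mr = - (ursubmx Mr)^T].
Proof.
move=> H; set A := ulsubmx Mr; set B := ursubmx Mr; set C := dlsubmx Mr; set D := drsubmx Mr.
have E : Mr = block_mx A B C D by rewrite submxK.
move: H; rewrite E tr_block_mx opp_block_mx.
case/eq_block_mx => h1 h2 h3 h4; split => //.
by rewrite h3 opprK.
Qed.

Lemma trZ (A : 'M[R]_g) : A^T = - A -> forall U : 'M[R]_g, (U^T *m A *m U)^T = - (U^T *m A *m U).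
Proof. by move=> AT U; rewrite !trmx_mul trmxK AT mulNmx mulmxN mulmxA. Qed.

Lemma ReE_anti (Mr : 'M[R]_(g + g)) : Mr^T = - Mr -> (ReE tau Mr)^T = - ReE tau Mr.
Proof.
case/anti_blocks => AT DT _.
rewrite /ReE !linearD !linearN /= (trZ DT) (trZ DT) AT !trmx_mul !trmxK.
apply/matrixP => i j; rewrite ?(eD, eN); ring.
Qed.

Lemma ImE_anti (Mr : 'M[R]_(g + g)) : Mr^T = - Mr -> (ImE tau Mr)^T = - ImE tau Mr.
Proof.
case/anti_blocks => AT DT _.
rewrite /ImE !linearD !linearN /= !trmx_mul !trmxK DT ?(mulmxN, mulNmx, mulmxA).
apply/matrixP => i j; rewrite ?(eD, eN); ring.
Qed.
End Anti.
Section Main.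
Variable R : realType.
Local Notation C := R[i].
Variables (g : nat) (tau : 'M[C]_g).
Hypothesis hIm : \det (map_mx (fun z : C => complex.Im z) tau) != 0.
Local Notation N := #|{: pairT (g + g)}|.
Local Notation fam i j := (dij_family tau i j).

Lemma existsK' (s : seq C) : exists K : 'M[rat]_(size s),
  `[< (forall w, (w <= K)%MS -> lin w = 0) /\ (size s - \rank K <= qspan_dim s)%N >].
Proof. by case: (existsK s) => K HK; exists K; apply/asboolP. Qed.
Definition Kp i j : 'M[rat]_(size (fam i j)) := xchoose (existsK' (fam i j)).
Definition Lp i j : 'M[rat]_(N, size (fam i j)) := \matrix_(t, k) (cf i j (Et t))`_k.
Definition Up i j : 'M[rat]_N := kermx (Lp i j *m cokermx (Kp i j)).
Definition Wm : 'M[rat]_N := (\bigcap_(i : 'I_g) (\bigcap_(j : 'I_g | (i < j)%N) Up i j))%MS.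

Lemma Kp_good i j w : (w <= Kp i j)%MS -> lin w = 0.
Proof. exact: (proj1 (asboolP _ (xchooseP (existsK' (fam i j))))). Qed.
Lemma Kp_rank i j : (size (fam i j) - \rank (Kp i j) <= dij tau i j)%N.
Proof. exact: (proj2 (asboolP _ (xchooseP (existsK' (fam i j))))). Qed.

Lemma Wm_rank : (N - \rank Wm <= \sum_(i < g) \sum_(j < g | (i < j)%N) dij tau i j)%N.
Proof.
apply: leq_trans (cap_rank _ _) _; apply: leq_sum => i _.
apply: leq_trans (cap_rank _ _) _; apply: leq_sum => j _.
rewrite /Up mxrank_ker.
have := rank_leq_row (Lp i j *m cokermx (Kp i j)).
have := mxrankM_maxr (Lp i j) (cokermx (Kp i j)); rewrite mxrank_coker.
have := Kp_rank i j => h1 h2 h3.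
by rewrite subKn //; apply: leq_trans h2 h1.
Qed.

Lemma LpE i j (x : 'rV[rat]_N) k : (x *m Lp i j) 0 k = (cf i j (Mx x))`_k.
Proof. by rewrite cf_lin mxE; apply: eq_bigr => t _; rewrite mxE. Qed.

Lemma Wm_NSQ x : (x <= Wm)%MS -> NSQ tau (Mx x).
Proof.
move=> xW; split; first exact: Mx_tr.
move=> Mr.
have MrT : Mr^T = - Mr by rewrite /Mr map_trmx Mx_tr map_mxN.
have hEij (i j : 'I_g) : (i < j)%N -> ReE tau Mr i j = 0 /\ ImE tau Mr i j = 0.
  move=> lij.
  have xU : (x <= Up i j)%MS.
    move/sub_bigcapmxP: xW => /(_ i isT) /sub_bigcapmxP /(_ j lij); exact.
  move/sub_kermxP: xU; rewrite mulmxA => /eqP; rewrite -submxE => /Kp_good.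
  rewrite /lin; under eq_bigr do rewrite LpE.
  rewrite fam_sum ?Mx_tr // => -[] h1 h2.
  by split; [move: h1|move: h2]; rewrite -/Mr; lra.
have ReE0 : ReE tau Mr = 0.
  by apply: anti_zero; [exact: ReE_anti | move=> i j /hEij []].
have ImE0 : ImE tau Mr = 0.
  by apply: anti_zero; [exact: ImE_anti | move=> i j /hEij []].
have Yu : Ym tau \in unitmx by rewrite unitmxE unitfE.
have := block_J Yu ReE0 ImE0.
case: (anti_blocks MrT) => _ _ dlE.
have MrE : Mr = block_mx (ulsubmx Mr) (ursubmx Mr) (- (ursubmx Mr)^T) (drsubmx Mr).
  by rewrite -dlE submxK.
rewrite /= -MrE.
done.
Qed.

Lemma part1 : ((2 * g ^ 2 - g) - \sum_(i < g) \sum_(j < g | (i < j)%N) dij tau i j <= picard_number tau)%N.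
Proof.
have NE : (2 * N = (g + g) * (g + g).-1)%N := card_pairT (g + g).
have NW := Wm_rank.
have rW : (\rank Wm <= N)%N := rank_leq_col Wm.
set r := \rank Wm in NW rW.
have hr : (r < ((g + g) ^ 2).+1)%N.
  rewrite ltnS; apply: leq_trans rW _; nia.
suff : (r <= picard_number tau)%N.
  move=> H; apply: leq_trans H; nia.
apply: (@leq_bigmax_cond _ _ (fun n : 'I_((g + g) ^ 2).+1 => val n) (Ordinal hr)).
apply/asboolP.
pose Wb := row_base Wm.
pose Xt := [tuple Mx (row l Wb) | l < r].
exists Xt; split.
- by rewrite size_tuple.
- apply/freeP => kf Hk l.
  pose w : 'rV[rat]_r := \row_l kf l.
  have : Mx (w *m Wb) = 0.
    rewrite mulmx_sum_row Mx_lin -[RHS]Hk; apply: eq_bigr => l' _.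
    by rewrite mxE -tnth_nth tnth_mktuple.
  move/Mx_inj => h.
  have w0 : w = 0 by apply: (row_free_inj (row_base_free Wm)); rewrite h mul0mx.
  by move/rowP: w0 => /(_ l); rewrite !mxE.
- move=> M /mapP [l _ ->]; apply: Wm_NSQ.
  rewrite -(eq_row_base Wm); exact: row_sub.
Qed.
End Main.
Theorem proposition2p3 (R : realType) (g : nat) (tau : 'M[R[i]]_g)
    (hIm : \det (map_mx (fun z : R[i] => complex.Im z) tau) != 0) :
  let S := (\sum_(i < g) \sum_(j < g | (i < j)%N) dij tau i j)%N in
  ((2 * g ^ 2 - g)%:R - S%:R <= (picard_number tau)%:R :> rat) /\
  (forall d : nat, field_degree tau d ->
     (g ^ 2)%:R - (g * (g - 1))%:R * (d%:R / 2 - 1) <= (2 * g ^ 2 - g)%:R - S%:R :> rat).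
Proof.
move=> S; split; last by move=> d Hd; exact: part2 Hd.
have := part1 hIm; rewrite -/S leq_subLR => H.
have : ((2 * g ^ 2 - g)%:R <= S%:R + (picard_number tau)%:R :> rat) by rewrite -natrD ler_nat.
lra.
Qed.
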